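(* Let $U\subseteq\mathbb{R}^n$ and $1<p<2$. Then for every $k>0$ there exists a constant $C(k)>0$ such that for every two nonnegative functions $f\in L^{2,\infty}(U)$ and $g\in L^p(U)$ there exist functions $\tilde f\in L^{2,\infty}(U)$ and $\tilde g\in L^p(U)$ with $f+g=\tilde f+\tilde g$, $\tilde g\in\{0\}\cup(k,\infty]$ pointwise, $\tilde f\le k$, and $$\|\tilde f\|_{L^{2,\infty}(U)}^2+\|\tilde g\|_{L^p(U)}^p\le C(k)\left(\|f\|_{L^{2,\infty}(U)}^2+\|g\|_{L^p(U)}^p\right).$$
   Context: $L^{2,\infty}(U)$ is the weak $L^2$ space with quasinorm $\|f\|_{L^{2,\infty}(U)}=\sup_{t>0}t\,\mathcal{L}^n(\{x\in U:|f(x)|>t\})^{1/2}$. *)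

(* Defs.v *)
From HB Require Import structures.
From mathcomp Require Import all_boot all_order all_algebra.
From mathcomp Require Import all_classical all_reals all_analysis.
From mathcomp Require Import measurable_realfun.
Set Implicit Arguments. Unset Strict Implicit. Unset Printing Implicit Defensive.
Import Order.TTheory GRing.Theory Num.Theory.
Local Open Scope classical_set_scope.
Local Open Scope ring_scope.

Record mspace (R : realType) := MSpace {
  ms_disp : measure_display;
  ms_car : measurableType ms_disp;
  ms_meas : {measure set ms_car -> \bar R} }.

(* R^n with its n-dimensional Lebesgue measure on Borel sets, built as the
   iterated product  ((unit * R) * R) * ... * R  of one-dimensional
   Lebesgue measures (R^0 is a point with the Dirac mass), i.e.
   lambda_{n+1} = lambda_n \x lambda_1. *)
Definition leb1 (R : realType) : {sigma_finite_measure set (measurableTypeR R) -> \bar R} :=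
  @lebesgue_measure R.

Fixpoint lebRn (R : realType) (n : nat) : mspace R :=
  match n with
  | 0 => @MSpace R _ unit (@dirac _ unit tt R)
  | n'.+1 => let M := lebRn R n' in
      @MSpace R _ _
        ((ms_meas M) \x (leb1 R))%E
  end.

Definition Rn (R : realType) (n : nat) := ms_car (lebRn R n).
Definition lebesgue_n (R : realType) (n : nat)
  : {measure set Rn R n -> \bar R} := ms_meas (lebRn R n).

Local Open Scope ereal_scope.

Definition weakL2norm d (T : measurableType d) (R : realType)
  (mu : set T -> \bar R) (f : T -> \bar R) : \bar R :=
  ereal_sup [set (t%:E * (mu [set x | t%:E < `|f x|]) `^ (2^-1)%R)
            | t in [set t : R | (0 < t)%R]].

(* Main.v *)
Require Import Defs.
From HB Require Import structures.
From mathcomp Require Import all_boot all_order all_algebra.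
From mathcomp Require Import all_classical all_reals all_analysis.
From mathcomp Require Import measurable_realfun.
From mathcomp Require Import ring lra.
Import Order.TTheory GRing.Theory Num.Theory.
Local Open Scope classical_set_scope.
Local Open Scope ring_scope.
Local Open Scope ereal_scope.

Local Open Scope classical_set_scope.
Local Open Scope ring_scope.
Local Open Scope ereal_scope.



Lemma mono_integral d (T : measurableType d) (R : realType)
  (mu : {measure set T -> \bar R}) (F G : T -> \bar R) :
  (forall x, 0 <= F x) -> (forall x, F x <= G x) ->
  \int[mu]_x F x <= \int[mu]_x G x.
Proof.
move=> F0 FG.
rewrite ge0_integralE//; rewrite [X in _ <= X]ge0_integralE; last first.
  by move=> x _; exact: le_trans (F0 x) (FG x).
apply: le_ereal_sup => _ /= [h hF <-]; exists h => //= x.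
apply: le_trans (hF x) _; rewrite /patch; case: ifP => //.
Qed.

Lemma geo_le (R : realType) (K r : R) : (0 <= K)%R -> (0 <= r)%R -> (r < 1)%R ->
  \sum_(j <oo) (K * r ^+ j)%:E <= (K / (1 - r))%:E.
Proof.
move=> K0 r0 r1.
apply: lime_le; first by apply: is_cvg_nneseries => n _ _; rewrite lee_fin mulr_ge0 // exprn_ge0.
apply: nearW => n; rewrite sumEFin lee_fin.
have := geometric_seriesE K (negbT (lt_eqF r1)) => /(congr1 (fun f => f n)) /=.
rewrite /series /= => ->.
rewrite ler_pdivrMr ?subr_gt0 // divfK ?subr_eq0 ?(lt_eqF r1) //.
  by rewrite ler_piMr // gerBl exprn_ge0.
by rewrite eq_sym (negbT (lt_eqF r1)).
Qed.

Local Open Scope ring_scope.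
Lemma powX_nat (R : realType) (b p : R) n : 0 <= b -> (b ^+ n) `^ p = (b `^ p) ^+ n.
Proof.
move=> b0; rewrite -powR_mulrn // powRAC powR_mulrn // powR_ge0 //.
Qed.

Lemma sq_powR (R : realType) (s p : R) (s0 : 0 < s) : s ^+ 2 = s `^ p * s `^ (2 - p).
Proof.
rewrite -powRD; last by rewrite (gt_eqF s0) implybT.
rewrite addrC subrK; have := powR_mulrn 2 (ltW s0); by move=> ->.
Qed.

Local Open Scope ereal_scope.
Section layer.
Context d (T : measurableType d) (R : realType) (mu : {measure set T -> \bar R}).
Variables (F : T -> \bar R) (mF : measurable_fun setT F) (F0 : forall x, 0 <= F x).
Variables (w p a : R) (p0 : (0 < p)%R) (p2 : (p < 2)%R) (a0 : (0 < a)%R).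

Let c j := ((2 ^+ j.+1 * a) `^ p)%R.
Let A j := [set x | ((2 ^+ j * a)%:E < F x)].

Let c_ge j : (a `^ p <= c j)%R.
Proof.
apply: (ge0_ler_powR (ltW p0)).
- by rewrite nnegrE ltW.
- by rewrite nnegrE mulr_ge0 ?exprn_ge0 // ltW.
- by rewrite ler_peMl ?(ltW a0) // exprn_ege1 // ler1n.
Qed.

Let t0 x j : 0 <= (c j * \1_(A j) x)%:E.
Proof. by rewrite lee_fin mulr_ge0 ?powR_ge0 // indicE ler0n. Qed.

Lemma layer_pt x : (if (a%:E < F x) then F x `^ p else 0) <= \sum_(j <oo) (c j * \1_(A j) x)%:E.
Proof.
case: ifPn => aF; last exact: nneseries_ge0.
move: (F0 x) aF; case Fx: (F x) => [r| |] //.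
- rewrite !lee_fin lte_fin => r0 ar.
  have exP : exists j, (r <= 2 ^+ j.+1 * a)%R.
    exists (Num.bound (r / a)); apply/ltW; rewrite -ltr_pdivrMr //.
    apply: (lt_le_trans (archi_boundP _)); first by rewrite divr_ge0 // ltW.
    rewrite -natrX ler_nat; apply: leq_trans (leqnSn _) _; exact: ltnW (ltn_expl _ _).
  case: (ex_minnP exP) => J PJ Jmin.
  have AJ : A J x.
    rewrite /A /= Fx lte_fin; case: J PJ Jmin => [|J] PJ Jmin.
      by rewrite expr0 mul1r.
    rewrite ltNge; apply/negP => H; have := Jmin J H; by rewrite ltnn.
  apply: le_trans (nneseries_lim_ge J.+1 _); last by move=> *; exact: t0.
  rewrite big_nat_recr //= indicE mem_set // mulr1.
  rewrite -[X in X <= _]add0e; apply: leeD; first by apply: sume_ge0 => *; exact: t0.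
  rewrite lee_fin; apply: (ge0_ler_powR (ltW p0)) => //.
  by rewrite nnegrE mulr_ge0 ?exprn_ge0 ?ltW.
- move=> _ _; rewrite poweRyr ?gt_eqF //.
  set S := \sum_(j <oo) _.
  have S0 : 0 <= S by exact: nneseries_ge0.
  have Sge n : ((a `^ p *+ n)%:E <= S).
    apply: le_trans (nneseries_lim_ge n _); last by move=> *; exact: t0.
    rewrite sumEFin lee_fin.
    have -> : (a `^ p *+ n = \sum_(0 <= i < n) a `^ p)%R by rewrite sumr_const_nat subn0.
    apply: ler_sum => j _; apply: le_trans (c_ge j) _.
    by rewrite indicE mem_set ?mulr1 // /A /= Fx ltry.
  move: S0 Sge; case: S => [s| |] // s0 Sge.
  have ap0 : (0 < a `^ p)%R by exact: powR_gt0.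
  have := Sge (Num.bound (s / a `^ p)); rewrite lee_fin => H.
  have := archi_boundP (divr_ge0 s0 (ltW ap0)).
  by rewrite ltr_pdivrMr // mulr_natl => /(le_lt_trans H); rewrite ltxx.
Qed.

Hypothesis wF : forall t, (0 < t)%R -> (t ^+ 2)%:E * mu [set x | t%:E < F x] <= (w ^+ 2)%:E.

Let mA j : measurable (A j).
Proof. by have := emeasurable_fun_o_infty measurableT mF (2 ^+ j * a)%:E; rewrite setTI. Qed.

Definition layerK := ((2 `^ p * a `^ p / a ^+ 2) / (1 - 2 `^ p / 4))%R.

Lemma layer_int : \int[mu]_x (if (a%:E < F x) then F x `^ p else 0) <= (layerK * w ^+ 2)%:E.
Proof.
apply: (@le_trans _ _ (\int[mu]_x \sum_(j <oo) (c j * \1_(A j) x)%:E)).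
  apply: mono_integral; last exact: layer_pt.
  by move=> x; case: ifP => // _; exact: poweR_ge0.
rewrite integral_nneseries //; last first.
  move=> j; apply/measurable_EFinP; apply: measurable_funM => //; exact: measurable_indic.
pose K0 := (2 `^ p * a `^ p / a ^+ 2)%R.
pose r := (2 `^ p / 4)%R.
have q0 : (0 < 2 `^ p)%R by exact: powR_gt0.
have q4 : (2 `^ p < 4)%R.
  have -> : (4 = 2 `^ 2 :> R)%R by rewrite (powR_mulrn 2 (_ : (0 <= 2)%R)) // expr2; ring.
  by rewrite /powR !gt_eqF // ltr_expR ltr_pM2r // ln_gt0 // ltr1n.
apply: (@le_trans _ _ (\sum_(j <oo) ((K0 * w ^+ 2) * r ^+ j)%:E)).
  apply: lee_nneseries => [j _ _|j _]; first by apply: integral_ge0 => *; exact: t0.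
  under eq_integral do rewrite EFinM.
  rewrite ge0_integralZl_EFin //; first last.
  - exact: powR_ge0.
  - by apply/measurable_EFinP; exact: measurable_indic.
  rewrite integral_indic // setIT.
  have t0' : (0 < 2 ^+ j * a)%R by rewrite mulr_gt0 // exprn_gt0.
  have := wF _ t0'; rewrite -lee_pdivlMl ?exprn_gt0 // => H.
  apply: le_trans (lee_wpmul2l _ H) _; first by rewrite lee_fin powR_ge0.
  rewrite -!EFinM lee_fin /c powRM ?exprn_ge0 ?(ltW a0) // powX_nat //.
  rewrite /K0 /r exprS exprMn -exprM mulnC exprM expr_div_n.
  have -> : (2 ^+ 2 = 4 :> R)%R by rewrite expr2; ring.
  have Y0 : (4 ^+ j != 0 :> R)%R by rewrite expf_neq0.
  rewrite le_eqVlt; apply/orP; left; apply/eqP; field.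
  by rewrite Y0 gt_eqF.
apply: (le_trans (@geo_le R (K0 * w ^+ 2)%R r _ _ _)).
- by rewrite mulr_ge0 ?sqr_ge0 // /K0 mulr_ge0 ?invr_ge0 ?exprn_ge0 ?(ltW a0) // mulr_ge0 ?powR_ge0.
- by rewrite /r divr_ge0 // ltW.
- by rewrite /r ltr_pdivrMr // mul1r.
rewrite lee_fin /layerK -/K0 -/r; rewrite le_eqVlt; apply/orP; left; apply/eqP.
by rewrite mulrAC.
Qed.
End layer.

Local Open Scope classical_set_scope.
Local Open Scope ring_scope.
Local Open Scope ereal_scope.


Section wl.
Context d (T : measurableType d) (R : realType) (mu : {measure set T -> \bar R}).

Lemma wl_bound (h : T -> \bar R) (B : R) : (0 <= B)%R ->
  (forall t, (0 < t)%R -> (t ^+ 2)%:E * mu [set x | t%:E < `|h x|] <= B%:E) ->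
  weakL2norm mu h <= (Num.sqrt B)%:E.
Proof.
move=> B0 hB; apply: ge_ereal_sup => _ [t t0 <-].
have M0 := measure_ge0 mu [set x | t%:E < `|h x|].
move: (hB t t0).
case E: (mu [set x | t%:E < `|h x|]) => [m| |].
- move=> H; have m0 : (0 <= m)%R by rewrite -lee_fin -E.
  rewrite poweR_EFin powR12_sqrt // -EFinM lee_fin; rewrite -EFinM lee_fin in H.
  have -> : t = Num.sqrt (t ^+ 2) by rewrite sqrtr_sqr ger0_norm //; exact: ltW.
  by rewrite -sqrtrM ?sqr_ge0 //; apply: ler_wsqrtr.
- by rewrite mulry gtr0_sg ?exprn_gt0 // mul1e leNgt ltry.
- by move=> _; rewrite poweRNyr ?invr_neq0 // mule0 lee_fin sqrtr_ge0.
Qed.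

Lemma wl_sq (h : T -> \bar R) (w : R) : weakL2norm mu h = w%:E ->
  forall t, (0 < t)%R -> (t ^+ 2)%:E * mu [set x | t%:E < `|h x|] <= (w ^+ 2)%:E.
Proof.
move=> hw t t0.
have : (t%:E * (mu [set x | t%:E < `|h x|]) `^ (2^-1)%R) <= w%:E.
  rewrite -hw; apply: ereal_sup_ubound; by exists t.
have M0 := measure_ge0 mu [set x | t%:E < `|h x|].
case E: (mu [set x | t%:E < `|h x|]) => [m| |].
- move=> H; have m0 : (0 <= m)%R by rewrite -lee_fin -E.
  rewrite poweR_EFin powR12_sqrt // -EFinM lee_fin in H; rewrite -EFinM lee_fin.
  have w0 : (0 <= w)%R by apply: le_trans H; rewrite mulr_ge0 ?sqrtr_ge0 // ltW.
  have := lerXn2r 2 _ _ H.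
  rewrite exprMn sqr_sqrtr //; apply; rewrite nnegrE ?mulr_ge0 ?sqrtr_ge0 ?(ltW t0) //.
- move=> H; exfalso; move: H.
  by rewrite poweRyr ?invr_neq0 // mulry gtr0_sg // mul1e leNgt ltry.
- by move=> _; rewrite mulrNy gtr0_sg ?exprn_gt0 // mul1e leNye.
Qed.
End wl.

Local Open Scope classical_set_scope.
Local Open Scope ring_scope.
Local Open Scope ereal_scope.


Definition gtf {T} {R : realType} (F G : T -> \bar R) (k : R) :=
  (fun x => F x + G x) \_ [set x | k%:E < F x + G x].
Definition ftf {T} {R : realType} (F G : T -> \bar R) (k : R) :=
  (fun x => F x + G x) \_ (~` [set x | k%:E < F x + G x]).

Section core.
Context d (T : measurableType d) (R : realType) (mu : {measure set T -> \bar R}).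
Variables (F G : T -> \bar R) (mF : measurable_fun setT F) (mG : measurable_fun setT G).
Hypotheses (F0 : forall x, 0 <= F x) (G0 : forall x, 0 <= G x).
Variables (w I k p : R) (p1 : (1 < p)%R) (p2 : (p < 2)%R) (k0 : (0 < k)%R).
Hypothesis wF : forall t, (0 < t)%R -> (t ^+ 2)%:E * mu [set x | t%:E < F x] <= (w ^+ 2)%:E.
Hypothesis hI : \int[mu]_x (G x `^ p) <= I%:E.

Let p0 : (0 < p)%R. Proof. exact: lt_trans ltr01 p1. Qed.

Let mS : measurable_fun setT (fun x => F x + G x).
Proof. exact: emeasurable_funD. Qed.

Let mB : measurable [set x | k%:E < F x + G x].
Proof. by have := emeasurable_fun_o_infty measurableT mS k%:E; rewrite setTI. Qed.

Lemma mgt : measurable_fun setT (gtf F G k).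
Proof. by apply/(measurable_restrictT _ mB); exact: measurable_funTS. Qed.

Lemma mft : measurable_fun setT (ftf F G k).
Proof.
apply/(measurable_restrictT _ (measurableC mB)); exact: measurable_funTS.
Qed.

Let I0 : (0 <= I)%R.
Proof.
by rewrite -lee_fin; apply: le_trans hI; apply: integral_ge0 => x _; exact: poweR_ge0.
Qed.

Lemma cheb s : (0 < s)%R -> (s `^ p)%:E * mu [set x | s%:E < G x] <= I%:E.
Proof.
move=> s0.
pose A := [set x | s%:E < G x].
have mA : measurable A.
  by have := emeasurable_fun_o_infty measurableT mG s%:E; rewrite setTI.
have -> : (s `^ p)%:E * mu A = \int[mu]_x ((s `^ p)%:E * (\1_A x : R)%:E).
  have h1 : forall x, 0 <= (\1_A x : R)%:E.
    by move=> x; rewrite lee_fin indicE ler0n.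
  have h2 : measurable_fun setT (fun x => (\1_A x : R)%:E).
    by apply/measurable_EFinP; exact: measurable_indic.
  by rewrite ge0_integralZl_EFin ?powR_ge0 // ?integral_indic ?setIT // => x _; exact: h1.
apply: le_trans hI; apply: mono_integral => x.
  by rewrite -EFinM lee_fin mulr_ge0 ?powR_ge0 // indicE ler0n.
rewrite indicE; case: (boolP (x \in _)) => [/set_mem /= sG|_]; last first.
  by rewrite mule0 poweR_ge0.
rewrite mule1; have {sG}sG : s%:E < G x := sG; move: sG (G0 x); case: (G x) => [g| |] //.
- rewrite lte_fin lee_fin => sg g0; rewrite poweR_EFin lee_fin.
  by apply: (ge0_ler_powR (ltW p0)); rewrite ?nnegrE ?(ltW s0) ?(ltW sg).
- by move=> _ _; rewrite poweRyr ?gt_eqF // leey.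
Qed.

Lemma ft_weak t : (0 < t)%R ->
  (t ^+ 2)%:E * mu [set x | t%:E < `|ftf F G k x|] <= (4 * w ^+ 2 + 4 * k `^ (2 - p) * I)%:E.
Proof.
move=> t0.
have B0 : (0 <= 4 * w ^+ 2 + 4 * k `^ (2 - p) * I)%R.
  by apply: addr_ge0; apply: mulr_ge0; rewrite ?ler0n ?sqr_ge0 //; apply: mulr_ge0; rewrite ?ler0n ?powR_ge0.
have [kt|tk] := leP k t.
  have -> : [set x | t%:E < `|ftf F G k x|] = set0.
    apply/seteqP; split => x //=; rewrite /ftf /patch.
    case: ifPn => [/set_mem /= nB|_]; last by rewrite abse0 lte_fin ltNge (ltW t0).
    rewrite gee0_abs ?adde_ge0 // => H; apply: nB; apply: le_lt_trans H.
    by rewrite lee_fin.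
  by rewrite measure0 mule0 lee_fin.
pose A1 := [set x | (t / 2)%:E < F x]; pose A2 := [set x | (t / 2)%:E < G x].
have t20 : (0 < t / 2)%R by rewrite divr_gt0.
have mA1 : measurable A1.
  by have := emeasurable_fun_o_infty measurableT mF (t/2)%:E; rewrite setTI.
have mA2 : measurable A2.
  by have := emeasurable_fun_o_infty measurableT mG (t/2)%:E; rewrite setTI.
have mC : measurable [set x | t%:E < `|ftf F G k x|].
  have := emeasurable_fun_o_infty measurableT
    (measurableT_comp (@abse_measurable R setT) mft) t%:E.
  by rewrite setTI.
have sub : [set x | t%:E < `|ftf F G k x|] `<=` A1 `|` A2.
  move=> x /=; rewrite /ftf /patch.
  case: ifPn => _; last by rewrite abse0 lte_fin ltNge (ltW t0).
  rewrite gee0_abs ?adde_ge0 // => H.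
  have [h1|h1] := ltP (t / 2)%:E (F x); first by left.
  have [h2|h2] := ltP (t / 2)%:E (G x); first by right.
  exfalso; move: H; apply/negP; rewrite -leNgt.
  have -> : t%:E = (t / 2)%:E + (t / 2)%:E by rewrite -EFinD -splitr.
  exact: leeD.
apply: (@le_trans _ _ ((t ^+ 2)%:E * (mu A1 + mu A2))).
  apply: lee_wpmul2l; first by rewrite lee_fin sqr_ge0.
  apply: le_trans (measureU2 _ mA1 mA2).
  by apply: le_measure => //; rewrite inE //; exact: measurableU.
rewrite ge0_muleDr ?measure_ge0 // EFinD; apply: leeD.
  have -> : (t ^+ 2)%:E = 4%:E * ((t / 2) ^+ 2)%:E by rewrite -EFinM; congr EFin; field.
  rewrite -muleA (@EFinM _ 4 (w ^+ 2)); apply: lee_wpmul2l; first by rewrite lee_fin.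
  exact: wF.
have -> : (t ^+ 2)%:E = (4 * (t / 2) `^ (2 - p))%:E * ((t / 2) `^ p)%:E.
  rewrite -EFinM; congr EFin.
  have -> : (t ^+ 2 = 4 * (t / 2) ^+ 2)%R by field.
  by rewrite (@sq_powR R _ p t20); ring.
rewrite -muleA; apply: (@le_trans _ _ ((4 * (t / 2) `^ (2 - p))%:E * I%:E)).
  apply: lee_wpmul2l; last exact: cheb.
  by rewrite lee_fin mulr_ge0 ?ler0n ?powR_ge0.
rewrite -EFinM lee_fin ler_wpM2r // ler_wpM2l //.
apply: (ge0_ler_powR _); rewrite ?nnegrE ?subr_ge0 ?(ltW p2) ?(ltW t20) ?(ltW k0) //.
by rewrite ler_pdivrMr // (le_trans (ltW tk)) // ler_peMr ?(ltW k0) // ler1n.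
Qed.

Lemma gt_int : \int[mu]_x (`|gtf F G k x| `^ p) <= (2 `^ p * (layerK R p (k / 2) * w ^+ 2 + I))%:E.
Proof.
pose a := (k / 2)%R.
have a0 : (0 < a)%R by rewrite divr_gt0.
pose h1 := fun x => if (a%:E < F x) then F x `^ p else 0.
have h10 x : 0 <= h1 x by rewrite /h1; case: ifP => // _; exact: poweR_ge0.
have mh1 : measurable_fun setT h1.
  have -> : h1 = (fun x => F x `^ p) \_ [set x | a%:E < F x].
    apply/funext => x; rewrite /h1 /patch; case: ifPn => H.
      by rewrite mem_set.
    by rewrite memNset //= ; apply/negP.
  have mA : measurable [set x | a%:E < F x].
    by have := emeasurable_fun_o_infty measurableT mF a%:E; rewrite setTI.
  apply/(measurable_restrictT _ mA); apply: measurable_funTS.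
  exact: measurableT_comp (measurable_poweR p) mF.
have mGp : measurable_fun setT (fun x => G x `^ p).
  exact: measurableT_comp (measurable_poweR p) mG.
have q0 : (0 < 2 `^ p)%R by exact: powR_gt0.
apply: (@le_trans _ _ (\int[mu]_x ((2 `^ p)%:E * (h1 x + G x `^ p)))).
  apply: mono_integral => x; first exact: poweR_ge0.
  rewrite /gtf /patch; case: ifPn => [/set_mem /= kS|_]; last first.
    rewrite abse0 poweR0r ?gt_eqF //.
    by rewrite mule_ge0 ?lee_fin ?(ltW q0) // adde_ge0 ?poweR_ge0.
  rewrite gee0_abs ?adde_ge0 //; rewrite /h1.
  move: kS (F0 x) (G0 x); case: (F x) => [f| |]; case: (G x) => [g| |] //.
  - rewrite -EFinD !lte_fin !lee_fin => kfg f0 g0.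
    have key : forall u v : R, (0 <= u)%R -> (0 <= v)%R -> (v <= u)%R ->
        ((u + v) `^ p <= 2 `^ p * u `^ p)%R.
      move=> u v u0 v0 vu; rewrite -powRM ?ler0n //.
      apply: (ge0_ler_powR (ltW p0)); rewrite ?nnegrE ?addr_ge0 ?mulr_ge0 ?ler0n //.
      by rewrite mulr2n mulrDl mul1r lerD2l.
    case: ifPn => af; rewrite !poweR_EFin -EFinD -EFinM lee_fin.
    + have [gf|fg] := leP g f.
        apply: le_trans (key _ _ f0 g0 gf) _; rewrite ler_wpM2l ?(ltW q0) //.
        by rewrite lerDl powR_ge0.
      rewrite addrC; apply: le_trans (key _ _ g0 f0 (ltW fg)) _.
      by rewrite ler_wpM2l ?(ltW q0) // lerDr powR_ge0.
    + rewrite add0r addrC; apply: key => //.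
      rewrite -leNgt in af; apply: (le_trans af); apply/ltW.
      rewrite ltNge; apply/negP => ga; move: kfg; apply/negP; rewrite -leNgt.
      by rewrite (splitr k) lerD.
  - move=> _ _ _; rewrite [X in _ <= X](_ : _ = +oo) ?leey //.
    rewrite poweRyr ?gt_eqF // addey; last by case: ifP => _; rewrite ?poweR_EFin.
    by rewrite mulry gtr0_sg // mul1e.
  - move=> _ _ _; rewrite [X in _ <= X](_ : _ = +oo) ?leey //.
    rewrite ltry poweRyr ?gt_eqF // addye ?poweR_EFin //.
    by rewrite mulry gtr0_sg // mul1e.
  - move=> _ _ _; rewrite [X in _ <= X](_ : _ = +oo) ?leey //.
    rewrite ltry poweRyr ?gt_eqF // addye //.
    by rewrite mulry gtr0_sg // mul1e.
have h1G x : setT x -> 0 <= h1 x + G x `^ p by move=> _; rewrite adde_ge0 ?poweR_ge0.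
rewrite ge0_integralZl_EFin ?(ltW q0) //; last exact: emeasurable_funD.
rewrite ge0_integralD //; last by move=> x _; exact: poweR_ge0.
rewrite EFinM; apply: lee_wpmul2l; first by rewrite lee_fin ltW.
rewrite EFinD; apply: leeD; last exact: hI.
exact: (@layer_int d T R mu F mF F0 w p a p0 p2 a0 wF).
Qed.

End core.

Local Open Scope classical_set_scope.
Local Open Scope ring_scope.
Local Open Scope ereal_scope.


Lemma wl_ge0 d (T : measurableType d) (R : realType) (mu : {measure set T -> \bar R}) h :
  0 <= weakL2norm mu h.
Proof.
apply: (@le_trans _ _ ((1%R)%:E * (mu [set x | (1%R)%:E < `|h x|]) `^ (2^-1)%R)).
  by rewrite mule_ge0 ?poweR_ge0.
by apply: ereal_sup_ubound; exists 1%R => //; exact: ltr01.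
Qed.

Lemma Lnorm_powp d (T : measurableType d) (R : realType) (mu : {measure set T -> \bar R})
  (p : R) h : (0 < p)%R -> Lnorm mu p%:E h `^ p = \int[mu]_x `|h x| `^ p.
Proof.
move=> p0; rewrite unlock /= -poweRrM mulVf ?gt_eqF // poweRe1 //.
by apply: integral_ge0 => x _; exact: poweR_ge0.
Qed.

Theorem lemma3p2 (R : realType) (n : nat) (U : set (Rn R n))
  (mU : measurable U) (p : R) (p1 : (1 < p)%R) (p2 : (p < 2)%R) :
  let mu := mrestr (lebesgue_n R n) mU in
  forall k : R, (0 < k)%R ->
  exists C : R, (0 < C)%R /\
  forall f g : Rn R n -> \bar R,
    measurable_fun U f -> (forall x, U x -> 0 <= f x) ->
    weakL2norm mu f < +oo ->
    measurable_fun U g -> (forall x, U x -> 0 <= g x) ->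
    Lnorm mu p%:E g < +oo ->
    exists ft gt : Rn R n -> \bar R,
      [/\ measurable_fun U ft /\ weakL2norm mu ft < +oo,
           measurable_fun U gt /\ Lnorm mu p%:E gt < +oo,
           (forall x, U x -> f x + g x = ft x + gt x),
           (forall x, U x -> gt x = 0 \/ k%:E < gt x) /\
           (forall x, U x -> ft x <= k%:E) &
           (weakL2norm mu ft) `^ 2%R + (Lnorm mu p%:E gt) `^ p
             <= C%:E * ((weakL2norm mu f) `^ 2%R + (Lnorm mu p%:E g) `^ p)].
Proof.
move=> mu k k0.
have p0 : (0 < p)%R by exact: lt_trans ltr01 p1.
pose L := layerK R p (k / 2).
pose a1 := (k `^ (2 - p))%R.
pose q := (2 `^ p)%R.
have a10 : (0 <= a1)%R by exact: powR_ge0.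
have q0 : (0 <= q)%R by exact: powR_ge0.
exists (4 + 4 * a1 + q * `|L| + q)%R; split.
  have La : (0 <= `|L|)%R by exact: normr_ge0.
  have : (0 < 4 :> R)%R by rewrite ltr0n.
  have : (0 <= 4 * a1)%R by rewrite mulr_ge0 ?ler0n.
  have : (0 <= q * `|L|)%R by rewrite mulr_ge0.
  lra.
move=> f g mf f0 wf mg g0 Lg.
pose F := f \_ U; pose G := g \_ U.
have mF : measurable_fun setT F by exact/(measurable_restrictT _ mU).
have mG : measurable_fun setT G by exact/(measurable_restrictT _ mU).
have F0 x : 0 <= F x by rewrite /F /patch; case: ifPn => // /set_mem; exact: f0.
have G0 x : 0 <= G x by rewrite /G /patch; case: ifPn => // /set_mem; exact: g0.
have wlU h : weakL2norm mu h = weakL2norm mu (h \_ U).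
  rewrite /weakL2norm; congr ereal_sup; apply: eq_imagel => t _.
  congr (_ * _); congr (_ `^ _); rewrite /mu /mrestr; congr (lebesgue_n R n _).
  apply/seteqP; split => x [/= H Ux]; split => //; rewrite /patch ?mem_set // in H *.
have wl0 := @wl_ge0 _ _ _ mu f.
pose w := fine (weakL2norm mu f).
have ew : weakL2norm mu f = w%:E by rewrite /w fineK // ge0_fin_numE.
have wF t : (0 < t)%R -> (t ^+ 2)%:E * mu [set x | t%:E < F x] <= (w ^+ 2)%:E.
  move=> t0; have := @wl_sq _ _ _ mu F w _ t t0.
  have -> : [set x | t%:E < `|F x|] = [set x | t%:E < F x].
    by apply/seteqP; split => x /=; rewrite gee0_abs.
  by apply; rewrite -wlU.
pose J := \int[mu]_x `|g x| `^ p.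
have J0 : 0 <= J by apply: integral_ge0 => x _; exact: poweR_ge0.
have Jfin : J < +oo.
  move: Lg; rewrite unlock /=; apply: lty_poweRy; by rewrite invr_neq0 // gt_eqF.
pose I := fine J.
have eJ : J = I%:E by rewrite /I fineK // ge0_fin_numE.
have hI : \int[mu]_x (G x `^ p) <= I%:E.
  rewrite -eJ; apply: mono_integral => x; first exact: poweR_ge0.
  rewrite /G /patch; case: ifPn => [/set_mem Ux|_]; first by rewrite gee0_abs ?g0.
  by rewrite poweR0r ?gt_eqF // poweR_ge0.
have I0 : (0 <= I)%R by rewrite -lee_fin -eJ.
pose B1 := (4 * w ^+ 2 + 4 * a1 * I)%R.
have B10 : (0 <= B1)%R.
  by rewrite /B1 addr_ge0 // mulr_ge0 ?sqr_ge0 ?mulr_ge0 ?ler0n.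
have hft := ft_weak _ _ _ mu F G mF mG F0 G0 w I k p p1 p2 k0 wF hI.
have wft : weakL2norm mu (ftf F G k) <= (Num.sqrt B1)%:E.
  exact: (wl_bound _ _ _ mu (ftf F G k) B1 B10 hft).
have gtI := gt_int _ _ _ mu F G mF mG F0 G0 w I k p p1 p2 k0 wF hI.
have hFx x : U x -> F x = f x by move=> Ux; rewrite /F /patch mem_set.
have hGx x : U x -> G x = g x by move=> Ux; rewrite /G /patch mem_set.
exists (ftf F G k), (gtf F G k); split.
- split; first exact: measurable_funTS (mft _ _ _ F G mF mG k).
  exact: le_lt_trans wft (ltry _).
- split; first exact: measurable_funTS (mgt _ _ _ F G mF mG k).
  rewrite unlock /=; apply: poweR_lty; exact: le_lt_trans gtI (ltry _).
- move=> x Ux; rewrite -hFx // -hGx // /ftf /gtf /patch in_setC.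
  by case: (boolP (x \in [set x0 | k%:E < F x0 + G x0])) => H /=; rewrite ?adde0 ?add0e.
- split.
    move=> x _; rewrite /gtf /patch; case: ifPn => [/set_mem /= H|_]; [by right|by left].
  move=> x _; rewrite /ftf /patch; case: ifPn => [/set_mem /= H|_].
    by rewrite leNgt; apply/negP.
  by rewrite lee_fin ltW.
have wft2 : weakL2norm mu (ftf F G k) `^ 2 <= B1%:E.
  have v0 := @wl_ge0 _ _ _ mu (ftf F G k).
  have vfin : weakL2norm mu (ftf F G k) < +oo by exact: le_lt_trans wft (ltry _).
  pose v := fine (weakL2norm mu (ftf F G k)).
  have ev : weakL2norm mu (ftf F G k) = v%:E by rewrite /v fineK // ge0_fin_numE.
  rewrite ev in wft v0; rewrite ev; move: wft v0.
  rewrite !lee_fin => vB v0; rewrite (powR_mulrn 2 v0).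
  rewrite -(sqr_sqrtr B10) !expr2; exact: ler_pM.
have w0 : (0 <= w)%R by rewrite -lee_fin -ew.
have ewf : weakL2norm mu f `^ 2 = (w ^+ 2)%:E by rewrite ew poweR_EFin (powR_mulrn 2 w0).
rewrite ewf (Lnorm_powp _ _ _ mu p g p0) (Lnorm_powp _ _ _ mu p (gtf F G k) p0) -/J eJ.
apply: le_trans (leeD wft2 gtI) _.
rewrite -EFinD -EFinD -EFinM lee_fin /B1.
have hL : (q * L * w ^+ 2 <= q * `|L| * w ^+ 2)%R.
  by rewrite ler_wpM2r ?sqr_ge0 // ler_wpM2l // ler_norm.
move: hL; have := sqr_ge0 w; move: (w ^+ 2)%R => W W0 hL.
have h1 : (0 <= a1 * W)%R by rewrite mulr_ge0.
have h2 : (0 <= q * `|L| * I)%R by rewrite !mulr_ge0.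
have h3 : (0 <= q * W)%R by rewrite mulr_ge0.
rewrite -/q -/L; nra.
Qed.
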